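(* Let $0<\delta<\frac12$, and let $T_0$ be an $N_0$-vertex tournament which is $\delta^2$-close to transitive. Then there exist an integer $N\geq(1-\delta)N_0$, an $N$-vertex subtournament $T$ of $T_0$, and an ordered graph $G$ on the vertex set of $T$ such that $G$ is consistent with $T$ and every vertex of $G$ has at most $4\delta N$ non-neighbors in $G$.
   Context: A tournament is an orientation of a complete graph; a subtournament is the tournament induced on a subset of vertices. An $N$-vertex tournament is $\delta$-close to transitive if it can be made transitive by reversing the orientation of at most $\delta N^2$ edges. An ordered graph is a graph with a linear order $\prec$ on its vertex set. An ordered graph $G$ is consistent with a tournament $T$ on the same vertex set if for all vertices $v\prec w$, $vw\in E(G)$ if and only if $v\to w$ in $T$. *)

(* Defs.v *)
From mathcomp Require Import all_boot all_order all_algebra.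
Set Implicit Arguments. Unset Strict Implicit. Unset Printing Implicit Defensive.
Import Order.TTheory GRing.Theory Num.Theory.

Definition is_tournament (V : finType) (t : rel V) : Prop :=
  (forall x, ~~ t x x) /\ (forall x y, x != y -> t x y = ~~ t y x).

Definition is_transitive_tournament (V : finType) (t : rel V) : Prop :=
  is_tournament t /\ transitive t.

Definition num_reversed (V : finType) (t t' : rel V) : nat :=
  #|[set p : V * V | t p.1 p.2 && ~~ t' p.1 p.2]|.

Definition close_to_transitive (R : realFieldType) (V : finType) (t : rel V) (d : R)
  : Prop :=
  exists t' : rel V, is_transitive_tournament t' /\
    ((num_reversed t t')%:R <= d * (#|V|%:R) ^+ 2)%R.

Definition strict_linear_order_on (V : finType) (S : {set V}) (lt : rel V) : Prop :=
  (forall x, x \in S -> ~~ lt x x) /\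
  (forall x y z, x \in S -> y \in S -> z \in S -> lt x y -> lt y z -> lt x z) /\
  (forall x y, x \in S -> y \in S -> x != y -> lt x y || lt y x).

Definition simple_graph_on (V : finType) (S : {set V}) (e : rel V) : Prop :=
  (forall x, x \in S -> ~~ e x x) /\
  (forall x y, x \in S -> y \in S -> e x y = e y x).

Definition consistent_with (V : finType) (S : {set V}) (lt e t : rel V) : Prop :=
  forall v w, v \in S -> w \in S -> lt v w -> e v w = t v w.

Definition non_neighbours (V : finType) (S : {set V}) (e : rel V) (v : V) : {set V} :=
  [set w in S | (w != v) && ~~ e v w].

(* Main.v *)
Require Import Defs.
From mathcomp Require Import all_boot all_order all_algebra.
From mathcomp Require Import ring lra.
Set Implicit Arguments. Unset Strict Implicit. Unset Printing Implicit Defensive.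
Import Order.TTheory GRing.Theory Num.Theory.

Lemma sum_in_card (T : finType) (A : {set T}) :
  (\sum_(p : T) (p \in A : nat) = #|A|)%N.
Proof.
rewrite -sum1_card [RHS]big_mkcond /=; apply: eq_bigr => p _; by case: (p \in A).
Qed.

Definition degr (V : finType) (A : {set V * V}) (v : V) : nat :=
  \sum_(w : V) (((v, w) \in A) || ((w, v) \in A) : nat).

Lemma sum_degr (V : finType) (A : {set V * V}) :
  (\sum_v degr A v <= 2 * #|A|)%N.
Proof.
apply: (@leq_trans (\sum_v (\sum_w ((v,w) \in A : nat) + \sum_w ((w,v) \in A : nat)))).
  apply: leq_sum => v _; rewrite /degr -big_split /=; apply: leq_sum => w _.
  by case: ((v,w) \in A); case: ((w,v) \in A).
rewrite big_split /= [X in (_ + X)%N]exchange_big /= !pair_bigA /=.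
have E1 : \sum_(p : V * V) ((p.1, p.2) \in A : nat) = #|A|.
  rewrite -sum_in_card; apply: eq_bigr => -[a b] _ //.
have E2 : \sum_(p : V * V) ((p.2, p.1) \in A : nat) = #|A|.
  rewrite -sum_in_card.
  rewrite (reindex (fun p : V * V => (p.2, p.1))) /=; last first.
    by exists (fun p : V * V => (p.2, p.1)) => -[a b].
  by apply: eq_bigr => -[a b] _.
by rewrite E1 mul2n addnn.
Qed.

Lemma card_le_degr (V : finType) (A : {set V * V}) (v : V) (P : {set V}) :
  (forall w, w \in P -> ((v, w) \in A) || ((w, v) \in A)) -> (#|P| <= degr A v)%N.
Proof.
move=> HP; rewrite /degr -sum1_card [X in (X <= _)%N]big_mkcond /=.
apply: leq_sum => w _; case: ifP => // /HP ->; done.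
Qed.

Local Open Scope ring_scope.

Theorem lemma4p2 (R : realFieldType) (V : finType) (t0 : rel V) (delta : R) :
  0 < delta -> delta < 2^-1 ->
  is_tournament t0 ->
  close_to_transitive t0 (delta ^+ 2) ->
  exists (N : nat) (S : {set V}),
    (1 - delta) * (#|V|%:R) <= N%:R /\ #|S| = N /\
    exists lt e : rel V,
      strict_linear_order_on S lt /\ simple_graph_on S e /\
      consistent_with S lt e t0 /\
      (forall v, v \in S -> (#|non_neighbours S e v|%:R <= 4 * delta * N%:R)).
Proof.
move=> d0 dh [irr0 asym0] [t' [[[irr' asym'] tr'] hrev]].
rewrite /num_reversed in hrev.
set A := [set p : V * V | t0 p.1 p.2 && ~~ t' p.1 p.2] in hrev.
set n := #|V| in hrev *.
set B := [set v | 2 * delta * n%:R < (degr A v)%:R].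
have hB : #|B|%:R <= delta * n%:R.
  have h1 : #|B|%:R * (2 * delta * n%:R) <= 2 * delta ^+ 2 * n%:R ^+ 2.
    apply: (@le_trans _ _ (\sum_(v in B) ((degr A v)%:R : R))).
      rewrite (mulr_natl (2 * delta * n%:R) #|B|) -sumr_const; apply: ler_sum => v.
      by rewrite inE => /ltW.
    apply: (@le_trans _ _ ((\sum_v degr A v)%:R)).
      rewrite natr_sum [X in _ <= X](bigID (mem B)) /= lerDl.
      by apply: sumr_ge0 => v _; apply: ler0n.
    apply: (@le_trans _ _ ((2 * #|A|)%:R)); first by rewrite ler_nat sum_degr.
    by rewrite natrM -mulrA ler_pM2l ?ltr0n.
  case n0: (n == 0)%N.
    have : (#|B| <= n)%N by apply: max_card.
    by rewrite (eqP n0) leqn0 => /eqP ->; rewrite mulr0.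
  have npos : 0 < delta * n%:R.
    by rewrite mulr_gt0 // ltr0n lt0n n0.
  have E : delta * n%:R * (2 * delta * n%:R) = 2 * delta ^+ 2 * n%:R ^+ 2 by ring.
  rewrite -(@ler_pM2r _ (2 * delta * n%:R)); last by rewrite -mulrA mulr_gt0.
  by rewrite E.
have Bn : (#|B| <= n)%N by apply: max_card.
have hN : (1 - delta) * n%:R <= #|~: B|%:R.
  have := cardsC B; rewrite -/n => E.
  have -> : #|~: B| = (n - #|B|)%N by rewrite -E addKn.
  by rewrite natrB // mulrBl mul1r lerD2l lerN2.
exists #|~: B|, (~: B); split => //; split => //.
exists t', (fun v w => (t' v w && t0 v w) || (t' w v && t0 w v)).
split.
  split; first by move=> x _; apply: irr'.
  split; first by move=> x y z _ _ _; apply: tr'.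
  by move=> x y _ _ nxy; rewrite asym' //; case: (t' y x).
split.
  split; first by move=> x _; rewrite (negbTE (irr' x)).
  by move=> x y _ _; rewrite orbC.
split.
  move=> v w _ _ h.
  have nvw : w != v.
    by apply/eqP => E; move: h; rewrite E (negbTE (irr' v)).
  by rewrite h (asym' w v nvw) h /= orbF.
move=> v vS.
have hd : (degr A v)%:R <= 2 * delta * n%:R.
  by move: vS; rewrite in_setC inE -leNgt.
apply: (@le_trans _ _ ((degr A v)%:R)).
  rewrite ler_nat; apply: card_le_degr => w.
  rewrite inE => /and3P [wS wv ne].
  have vw : v != w by rewrite eq_sym.
  rewrite !inE /=.
  case tvw: (t' v w).
    move: ne; rewrite (asym' w v wv) tvw /= orbF andbT => ne.
    by rewrite (asym0 w v wv) ne orbT.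
  move: ne; rewrite (asym' w v wv) tvw /= => ne.
  by rewrite (asym0 v w vw) ne.
have d2 : 0 <= 1 - 2 * delta.
  rewrite subr_ge0; have : 2 * delta <= 2 * 2^-1 by rewrite ler_pM2l // ltW.
  by rewrite mulfV // pnatr_eq0.
have h1 : 0 <= delta * (#|~: B|%:R - (1 - delta) * n%:R).
  by apply: mulr_ge0; [apply: ltW | rewrite subr_ge0].
have h2 : 0 <= delta * n%:R * (1 - 2 * delta).
  by apply: mulr_ge0 => //; apply: mulr_ge0; [apply: ltW | apply: ler0n].
apply: (le_trans hd); rewrite -subr_ge0.
have -> : 4 * delta * #|~: B|%:R - 2 * delta * n%:R =
  4 * (delta * (#|~: B|%:R - (1 - delta) * n%:R)) + 2 * (delta * n%:R * (1 - 2 * delta)) by ring.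
by apply: addr_ge0; apply: mulr_ge0.
Qed.
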